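(* Let $M=I\times F$ with the metric $g=-dt^2+f(t)^2g_F$, where $I\subset\mathbb{R}$ is an open interval, $f:I\to(0,\infty)$ is smooth and $(F,g_F)$ is a one-dimensional Riemannian manifold, and let $\overline\nabla$ be the semi-symmetric metric connection determined by $P=\frac{\partial}{\partial t}$. Then $(M,\overline\nabla)$ is Einstein with Einstein constant $\lambda$ if and only if there are constants $c_1,c_2$ such that: (1) if $\lambda<\frac14$: $f(t)=c_1e^{\frac{1+\sqrt{1-4\lambda}}{2}t}+c_2e^{\frac{1-\sqrt{1-4\lambda}}{2}t}$; (2) if $\lambda=\frac14$: $f(t)=c_1e^{\frac12t}+c_2te^{\frac12t}$; (3) if $\lambda>\frac14$: $f(t)=c_1e^{\frac12t}\cos\left(\frac{\sqrt{4\lambda-1}}{2}t\right)+c_2e^{\frac12t}\sin\left(\frac{\sqrt{4\lambda-1}}{2}t\right)$.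
   Context: $\nabla$ is the Levi-Civita connection of $g$, $\pi(X)=g(X,P)$, and $\overline\nabla_XY=\nabla_XY+\pi(Y)X-g(X,Y)P$. Conventions: $\overline R(X,Y)Z=\overline\nabla_X\overline\nabla_YZ-\overline\nabla_Y\overline\nabla_XZ-\overline\nabla_{[X,Y]}Z$, $\overline{\mathrm{Ric}}(X,Y)=\sum_k\varepsilon_kg(\overline R(X,E_k)Y,E_k)$ for a local orthonormal frame $(E_k)$, $\varepsilon_k=g(E_k,E_k)$; Einstein with constant $\lambda$ means $\overline{\mathrm{Ric}}=\lambda g$. *)

(* Defs.v *)
From Stdlib Require Import Reals Lra.
From Coquelicot Require Import Coquelicot.
Open Scope R_scope.

(* Everything is computed in the product chart (t, s) of M = I x J, where
   I = (a,b) is the open interval of the statement and J = (c,d) is an open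
   interval parametrizing (a chart of) the 1-dimensional fiber F, on which
   g_F = h(s)^2 ds^2.  Coordinate indices are the naturals 0 (for t) and 1 (for s). *)

Definition in_oint (a b : Rbar) (x : R) : Prop := Rbar_lt a x /\ Rbar_lt x b.

Definition smooth_on (a b : Rbar) (f : R -> R) : Prop :=
  forall (n : nat) (x : R), in_oint a b x -> ex_derive_n f n x.

Definition sum2 (F : nat -> R) : R := F 0%nat + F 1%nat.

Definition delta (i j : nat) : R := if Nat.eqb i j then 1 else 0.

Definition pd (i : nat) (F : R -> R -> R) (t s : R) : R :=
  match i with
  | 0%nat => Derive (fun u => F u s) t
  | _ => Derive (fun u => F t u) s
  end.

Definition metric := nat -> nat -> R -> R -> R.

Definition warped_metric (f h : R -> R) : metric := fun i j t s =>
  match i, j with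
  | 0%nat, 0%nat => -1
  | 1%nat, 1%nat => (f t)^2 * (h s)^2
  | _, _ => 0
  end.

Definition ginv (g : metric) : metric := fun i j t s =>
  let det := g 0%nat 0%nat t s * g 1%nat 1%nat t s - g 0%nat 1%nat t s * g 1%nat 0%nat t s in
  match i, j with
  | 0%nat, 0%nat => g 1%nat 1%nat t s / det
  | 1%nat, 1%nat => g 0%nat 0%nat t s / det
  | 0%nat, 1%nat => - g 0%nat 1%nat t s / det
  | 1%nat, 0%nat => - g 1%nat 0%nat t s / det
  | _, _ => 0
  end.

(* Christoffel symbols of the Levi-Civita connection: nabla_{d_i} d_j = Gamma^k_ij d_k *)
Definition LC_Gamma (g : metric) (k i j : nat) (t s : R) : R :=
  sum2 (fun l => / 2 * ginv g k l t s *
    (pd i (g j l) t s + pd j (g i l) t s - pd l (g i j) t s)).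

(* semi-symmetric metric connection
   bar nabla_X Y = nabla_X Y + pi(Y) X - g(X,Y) P,  pi(X) = g(X,P),
   for a vector field P with components Pc k. *)
Definition ssm_Gamma (g : metric) (Pc : nat -> R -> R -> R) (k i j : nat) (t s : R) : R :=
  LC_Gamma g k i j t s
  + sum2 (fun a => g j a t s * Pc a t s) * delta k i
  - g i j t s * Pc k t s.

Definition P_dt : nat -> R -> R -> R := fun k _ _ => delta k 0.

(* curvature R(d_i,d_j)d_l = Rm^m_{ijl} d_m with the convention
   R(X,Y)Z = nabla_X nabla_Y Z - nabla_Y nabla_X Z - nabla_[X,Y] Z *)
Definition curv (G : nat -> nat -> nat -> R -> R -> R) (m i j l : nat) (t s : R) : R :=
  pd i (G m j l) t s - pd j (G m i l) t s
  + sum2 (fun n => G n j l t s * G m i n t s - G n i l t s * G m j n t s).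

(* Ricci tensor Ric(d_i,d_l) = sum_k eps_k g(R(d_i,E_k)d_l, E_k) for a frame
   E_k = e k a d_a with signs eps k *)
Definition ricci (g : metric) (G : nat -> nat -> nat -> R -> R -> R)
    (e : nat -> nat -> R -> R -> R) (eps : nat -> R) (i l : nat) (t s : R) : R :=
  sum2 (fun k => eps k *
    sum2 (fun a => sum2 (fun b =>
      e k a t s * e k b t s * sum2 (fun m => curv G m i a l t s * g m b t s)))).

(* the natural local orthonormal frame of the warped metric:
   E_0 = d/dt (eps = -1), E_1 = (1/(f h)) d/ds (eps = +1) *)
Definition warped_frame (f h : R -> R) : nat -> nat -> R -> R -> R := fun k a t s =>
  match k, a with
  | 0%nat, 0%nat => 1
  | 1%nat, 1%nat => / (f t * h s)
  | _, _ => 0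
  end.

Definition lorentz_eps (k : nat) : R := if Nat.eqb k 0 then -1 else 1.

Definition ssm_Einstein (a b c d : Rbar) (f h : R -> R) (lam : R) : Prop :=
  let g := warped_metric f h in
  forall t s : R, in_oint a b t -> in_oint c d s ->
  forall i l : nat, (i < 2)%nat -> (l < 2)%nat ->
    ricci g (ssm_Gamma g P_dt) (warped_frame f h) lorentz_eps i l t s = lam * g i l t s.

(* Main.v *)
Require Import Defs.
From Stdlib Require Import Reals Lra Lia Classical.
From Coquelicot Require Import Coquelicot.
Open Scope R_scope.

Lemma loc_oint a b t : in_oint a b t -> locally t (in_oint a b).
Proof.
  intros H. apply (open_and _ _ (open_Rbar_gt a) (open_Rbar_lt b)). exact H.
Qed.

Definition CG (f h : R -> R) (k i j : nat) (u v : R) : R :=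
  match k, i, j with
  | 0%nat, 1%nat, 1%nat => f u * Derive f u * h v ^ 2 - f u ^ 2 * h v ^ 2
  | 1%nat, 0%nat, 1%nat => Derive f u / f u
  | 1%nat, 1%nat, 0%nat => Derive f u / f u - 1
  | 1%nat, 1%nat, 1%nat => Derive h v / h v
  | _, _, _ => 0
  end.

Lemma D1 (f h : R -> R) (u v : R) : ex_derive f u ->
  Derive (fun w => f w ^ 2 * h v ^ 2) u = 2 * f u * Derive f u * h v ^ 2.
Proof. intros H. apply is_derive_unique. auto_derive; [auto|]. change (fun x => f x) with f. simpl; ring. Qed.

Lemma D2 (f h : R -> R) (u v : R) : ex_derive h v ->
  Derive (fun w => f u ^ 2 * h w ^ 2) v = f u ^ 2 * (2 * h v * Derive h v).
Proof. intros H. apply is_derive_unique. auto_derive; [auto|]. change (fun x => h x) with h. simpl; ring. Qed.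

Lemma CG_eq (f h : R -> R) (u v : R) (k i j : nat) : ex_derive f u -> ex_derive h v -> f u <> 0 -> h v <> 0 ->
  (k < 2)%nat -> (i < 2)%nat -> (j < 2)%nat ->
  ssm_Gamma (warped_metric f h) P_dt k i j u v = CG f h k i j u v.
Proof.
  intros Hf Hh Hf0 Hh0 Hk Hi Hj.
  destruct k as [|[|k]]; try lia; destruct i as [|[|i]]; try lia;
  destruct j as [|[|j]]; try lia;
  unfold ssm_Gamma, LC_Gamma, sum2, ginv, P_dt, delta, pd, CG; cbn -[Derive pow];
  rewrite ?D1, ?D2, ?Derive_const by assumption; field; auto.
Qed.

Lemma exd0 a b f u : smooth_on a b f -> in_oint a b u -> ex_derive f u.
Proof. intros H Hu. exact (H 1%nat u Hu). Qed.
Lemma exd1 a b f u : smooth_on a b f -> in_oint a b u -> ex_derive (Derive f) u.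
Proof. intros H Hu. exact (H 2%nat u Hu). Qed.

Section Comp.
Variables (a b c d : Rbar) (f h : R -> R).
Hypotheses (Hf : smooth_on a b f) (Hfp : forall t, in_oint a b t -> 0 < f t)
  (Hh : smooth_on c d h) (Hhp : forall s, in_oint c d s -> 0 < h s).

Lemma pd0_G t s k i j : in_oint a b t -> in_oint c d s ->
  (k < 2)%nat -> (i < 2)%nat -> (j < 2)%nat ->
  pd 0 (ssm_Gamma (warped_metric f h) P_dt k i j) t s = Derive (fun u => CG f h k i j u s) t.
Proof.
  intros Ht Hs Hk Hi Hj. unfold pd. apply Derive_ext_loc.
  apply (filter_imp (in_oint a b)); [|apply loc_oint; auto].
  intros u Hu. apply CG_eq; auto.
  - eapply exd0; eauto.
  - eapply exd0; eauto.
  - apply Rgt_not_eq, Hfp; auto.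
  - apply Rgt_not_eq, Hhp; auto.
Qed.

Lemma pd1_G t s k i j : in_oint a b t -> in_oint c d s ->
  (k < 2)%nat -> (i < 2)%nat -> (j < 2)%nat ->
  pd 1 (ssm_Gamma (warped_metric f h) P_dt k i j) t s = Derive (fun v => CG f h k i j t v) s.
Proof.
  intros Ht Hs Hk Hi Hj. unfold pd. apply Derive_ext_loc.
  apply (filter_imp (in_oint c d)); [|apply loc_oint; auto].
  intros u Hu. apply CG_eq; auto.
  - eapply exd0; eauto.
  - eapply exd0; eauto.
  - apply Rgt_not_eq, Hfp; auto.
  - apply Rgt_not_eq, Hhp; auto.
Qed.

Lemma E1 t s : in_oint a b t ->
  Derive (fun u => f u * Derive f u * h s ^ 2 - f u ^ 2 * h s ^ 2) t
  = h s ^ 2 * (Derive f t ^ 2 + f t * Derive (Derive f) t - 2 * f t * Derive f t).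
Proof.
  intros Ht. pose proof (exd0 _ _ _ _ Hf Ht). pose proof (exd1 _ _ _ _ Hf Ht).
  apply is_derive_unique. auto_derive; [auto|]. 
  change (fun x => f x) with f. change (fun x => Derive f x) with (Derive f). simpl; ring.
Qed.

Lemma E2 t : in_oint a b t ->
  Derive (fun u => Derive f u / f u - 1) t
  = (Derive (Derive f) t * f t - Derive f t ^ 2) / f t ^ 2.
Proof.
  intros Ht. pose proof (exd0 _ _ _ _ Hf Ht). pose proof (exd1 _ _ _ _ Hf Ht).
  pose proof (Hfp t Ht).
  apply is_derive_unique. auto_derive; [repeat split; auto; lra|]. 
  change (fun x => f x) with f. change (fun x => Derive f x) with (Derive f). simpl; field; lra.
Qed.

Lemma G_t t s k i j : in_oint a b t -> in_oint c d s ->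
  (k < 2)%nat -> (i < 2)%nat -> (j < 2)%nat ->
  ssm_Gamma (warped_metric f h) P_dt k i j t s = CG f h k i j t s.
Proof.
  intros Ht Hs Hk Hi Hj. apply CG_eq; auto.
  - eapply exd0; eauto.
  - eapply exd0; eauto.
  - apply Rgt_not_eq, Hfp; auto.
  - apply Rgt_not_eq, Hhp; auto.
Qed.

Definition RicF (t s : R) (i l : nat) : R :=
  match i, l with
  | 0%nat, 0%nat => (Derive (Derive f) t - Derive f t) / f t
  | 1%nat, 1%nat => - f t * h s ^ 2 * (Derive (Derive f) t - Derive f t)
  | _, _ => 0
  end.

Lemma ricci_eq t s i l : in_oint a b t -> in_oint c d s -> (i < 2)%nat -> (l < 2)%nat ->
  ricci (warped_metric f h) (ssm_Gamma (warped_metric f h) P_dt) (warped_frame f h) lorentz_eps i l t s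
  = RicF t s i l.
Proof.
  intros Ht Hs Hi Hl.
  pose proof (Hfp t Ht). pose proof (Hhp s Hs).
  destruct i as [|[|i]]; try lia; destruct l as [|[|l]]; try lia;
  unfold ricci, curv, sum2, RicF;
  rewrite ?pd0_G, ?pd1_G by (auto; lia);
  rewrite ?G_t by (auto; lia);
  cbn -[Derive pow];
  rewrite ?E1, ?E2, ?Derive_const by auto;
  field; lra.
Qed.
End Comp.

Lemma deriv2_loc a b (f F F1 F2 : R -> R) t : in_oint a b t ->
  (forall u, in_oint a b u -> f u = F u) ->
  (forall u, is_derive F u (F1 u)) -> (forall u, is_derive F1 u (F2 u)) ->
  Derive f t = F1 t /\ Derive (Derive f) t = F2 t.
Proof.
  intros Ht HF H1 H2.
  assert (HD : forall u, in_oint a b u -> Derive f u = F1 u).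
  { intros u Hu. rewrite (Derive_ext_loc f F). apply is_derive_unique; auto.
    apply (filter_imp (in_oint a b)); [|apply loc_oint; auto]. auto. }
  split; auto.
  rewrite (Derive_ext_loc (Derive f) F1). apply is_derive_unique; auto.
  apply (filter_imp (in_oint a b)); [|apply loc_oint; auto]. auto.
Qed.

Definition ODE (f : R -> R) (lam t : R) := Derive (Derive f) t - Derive f t + lam * f t = 0.

Lemma back1 a b f lam c1 c2 : lam < / 4 ->
  (forall t, in_oint a b t -> f t = c1 * exp ((1 + sqrt (1 - 4 * lam)) / 2 * t)
            + c2 * exp ((1 - sqrt (1 - 4 * lam)) / 2 * t)) ->
  forall t, in_oint a b t -> ODE f lam t.
Proof.
  intros Hl HF t Ht.
  set (q := sqrt (1 - 4 * lam)).
  assert (Hq : q * q = 1 - 4 * lam) by (apply sqrt_sqrt; lra).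
  set (r1 := (1 + q) / 2). set (r2 := (1 - q) / 2).
  destruct (deriv2_loc a b f (fun u => c1 * exp (r1 * u) + c2 * exp (r2 * u))
    (fun u => c1 * r1 * exp (r1 * u) + c2 * r2 * exp (r2 * u))
    (fun u => c1 * r1 * r1 * exp (r1 * u) + c2 * r2 * r2 * exp (r2 * u)) t Ht) as [E1 E2].
  - exact HF.
  - intros u. auto_derive; auto. field.
  - intros u. auto_derive; auto. field.
  - unfold ODE. rewrite E1, E2, (HF t Ht). fold q r1 r2.
    unfold r1, r2. replace lam with ((1 - q * q) / 4) by lra. clear E1 E2 HF; subst r1 r2; clearbody q. field.
Qed.

Lemma back2 a b f lam c1 c2 : lam = / 4 ->
  (forall t, in_oint a b t -> f t = c1 * exp (/ 2 * t) + c2 * t * exp (/ 2 * t)) ->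
  forall t, in_oint a b t -> ODE f lam t.
Proof.
  intros Hl HF t Ht.
  destruct (deriv2_loc a b f (fun u => c1 * exp (/ 2 * u) + c2 * u * exp (/ 2 * u))
    (fun u => exp (/ 2 * u) * (c1 / 2 + c2 * u / 2 + c2))
    (fun u => exp (/ 2 * u) * (c1 / 4 + c2 * u / 4 + c2)) t Ht) as [E1 E2].
  - exact HF.
  - intros u. auto_derive; auto. field.
  - intros u. auto_derive; auto. field.
  - unfold ODE. rewrite E1, E2, (HF t Ht), Hl. field.
Qed.

Lemma back3 a b f lam c1 c2 : / 4 < lam ->
  (forall t, in_oint a b t -> f t = c1 * exp (/ 2 * t) * cos (sqrt (4 * lam - 1) / 2 * t)
            + c2 * exp (/ 2 * t) * sin (sqrt (4 * lam - 1) / 2 * t)) ->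
  forall t, in_oint a b t -> ODE f lam t.
Proof.
  intros Hl HF t Ht.
  set (w := sqrt (4 * lam - 1) / 2).
  assert (Hq : sqrt (4 * lam - 1) * sqrt (4 * lam - 1) = 4 * lam - 1) by (apply sqrt_sqrt; lra).
  assert (Hw : w * w = lam - / 4) by (unfold w; nra).
  destruct (deriv2_loc a b f
    (fun u => c1 * exp (/ 2 * u) * cos (w * u) + c2 * exp (/ 2 * u) * sin (w * u))
    (fun u => exp (/ 2 * u) * ((c1 * cos (w * u) + c2 * sin (w * u)) / 2
               + w * (- c1 * sin (w * u) + c2 * cos (w * u))))
    (fun u => exp (/ 2 * u) * ((/ 4 - w * w) * (c1 * cos (w * u) + c2 * sin (w * u))
               + w * (- c1 * sin (w * u) + c2 * cos (w * u)))) t Ht) as [E1 E2].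
  - exact HF.
  - intros u. auto_derive; auto. field.
  - intros u. auto_derive; auto. field.
  - unfold ODE. rewrite E1, E2, (HF t Ht). fold w.
    replace lam with (w * w + / 4) by lra. field.
Qed.

Lemma oint_convex a b x y z : in_oint a b x -> in_oint a b y -> x <= z <= y -> in_oint a b z.
Proof.
  unfold in_oint; destruct a, b; simpl; intros; lra.
Qed.

Lemma const_on a b (phi : R -> R) x y :
  (forall t, in_oint a b t -> is_derive phi t 0) -> in_oint a b x -> in_oint a b y -> phi x = phi y.
Proof.
  intros Hd Hx Hy.
  destruct (Rtotal_order x y) as [Hl|[He|Hl]].
  - apply eq_is_derive; [|exact Hl]. intros t Ht. apply Hd.
    apply (oint_convex a b x y t Hx Hy Ht).
  - subst; reflexivity.
  - apply eq_sym, eq_is_derive; [|exact Hl]. intros t Ht. apply Hd.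
    apply (oint_convex a b y x t Hy Hx Ht).
Qed.

Ltac dtac f lam H u :=
  auto_derive;
  [ repeat split; auto | ];
  try change (fun x => Derive f x) with (Derive f);
  try change (fun x => f x) with f;
  simpl;
  replace (Derive (Derive f) u) with (Derive f u - lam * f u) by (pose proof H as HH; unfold ODE in HH; lra).

Lemma fwd1 a b f lam : smooth_on a b f -> lam < / 4 ->
  (forall t, in_oint a b t -> ODE f lam t) ->
  exists c1 c2 : R, forall t, in_oint a b t ->
        f t = c1 * exp ((1 + sqrt (1 - 4 * lam)) / 2 * t)
            + c2 * exp ((1 - sqrt (1 - 4 * lam)) / 2 * t).
Proof.
  intros Hs Hl HO.
  destruct (classic (exists t0, in_oint a b t0)) as [[t0 Ht0]|Hn];
    [| exists 0, 0; intros t Ht; exfalso; eauto].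
  set (q := sqrt (1 - 4 * lam)).
  assert (Hq : q * q = 1 - 4 * lam) by (apply sqrt_sqrt; lra).
  assert (Hq0 : 0 < q) by (apply sqrt_lt_R0; lra).
  set (r1 := (1 + q) / 2). set (r2 := (1 - q) / 2).
  set (phi1 := fun u => (Derive f u - r2 * f u) * exp (- (r1 * u))).
  set (phi2 := fun u => (Derive f u - r1 * f u) * exp (- (r2 * u))).
  assert (D1 : forall u, in_oint a b u -> is_derive phi1 u 0).
  { intros u Hu. pose proof (Hs 1%nat u Hu). pose proof (Hs 2%nat u Hu).
    simpl in *. unfold phi1. dtac f lam (HO u Hu) u.
    unfold r1, r2. replace lam with ((1 - q * q) / 4) by lra. field. }
  assert (D2 : forall u, in_oint a b u -> is_derive phi2 u 0).
  { intros u Hu. pose proof (Hs 1%nat u Hu). pose proof (Hs 2%nat u Hu).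
    simpl in *. unfold phi2. dtac f lam (HO u Hu) u.
    unfold r1, r2. replace lam with ((1 - q * q) / 4) by lra. field. }
  exists (phi1 t0 / (r1 - r2)), (phi2 t0 / (r2 - r1)).
  intros t Ht.
  rewrite <- (const_on a b phi1 t t0), <- (const_on a b phi2 t t0); auto.
  fold q r1 r2. unfold phi1, phi2. rewrite !exp_Ropp.
  assert (exp (r1 * t) > 0) by apply exp_pos.
  assert (exp (r2 * t) > 0) by apply exp_pos.
  unfold r1, r2 in *. field. repeat split; lra.
Qed.

Lemma fwd2 a b f lam : smooth_on a b f -> lam = / 4 ->
  (forall t, in_oint a b t -> ODE f lam t) ->
  exists c1 c2 : R, forall t, in_oint a b t ->
        f t = c1 * exp (/ 2 * t) + c2 * t * exp (/ 2 * t).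
Proof.
  intros Hs Hl HO.
  destruct (classic (exists t0, in_oint a b t0)) as [[t0 Ht0]|Hn];
    [| exists 0, 0; intros t Ht; exfalso; eauto].
  set (phi2 := fun u => (Derive f u - f u / 2) * exp (- (/ 2 * u))).
  set (phi1 := fun u => f u * exp (- (/ 2 * u)) - u * ((Derive f u - f u / 2) * exp (- (/ 2 * u)))).
  assert (D1 : forall u, in_oint a b u -> is_derive phi1 u 0).
  { intros u Hu. pose proof (Hs 1%nat u Hu). pose proof (Hs 2%nat u Hu).
    simpl in *. unfold phi1. dtac f lam (HO u Hu) u. rewrite Hl. field. }
  assert (D2 : forall u, in_oint a b u -> is_derive phi2 u 0).
  { intros u Hu. pose proof (Hs 1%nat u Hu). pose proof (Hs 2%nat u Hu).
    simpl in *. unfold phi2. dtac f lam (HO u Hu) u. rewrite Hl. field. }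
  exists (phi1 t0), (phi2 t0).
  intros t Ht.
  rewrite <- (const_on a b phi1 t t0), <- (const_on a b phi2 t t0); auto.
  unfold phi1, phi2. rewrite !exp_Ropp.
  assert (exp (/ 2 * t) > 0) by apply exp_pos.
  field. lra.
Qed.

Lemma fwd3 a b f lam : smooth_on a b f -> / 4 < lam ->
  (forall t, in_oint a b t -> ODE f lam t) ->
  exists c1 c2 : R, forall t, in_oint a b t ->
        f t = c1 * exp (/ 2 * t) * cos (sqrt (4 * lam - 1) / 2 * t)
            + c2 * exp (/ 2 * t) * sin (sqrt (4 * lam - 1) / 2 * t).
Proof.
  intros Hs Hl HO.
  destruct (classic (exists t0, in_oint a b t0)) as [[t0 Ht0]|Hn];
    [| exists 0, 0; intros t Ht; exfalso; eauto].
  set (w := sqrt (4 * lam - 1) / 2).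
  assert (Hq : sqrt (4 * lam - 1) * sqrt (4 * lam - 1) = 4 * lam - 1) by (apply sqrt_sqrt; lra).
  assert (Hq0 : 0 < sqrt (4 * lam - 1)) by (apply sqrt_lt_R0; lra).
  assert (Hw : w * w = lam - / 4) by (unfold w; nra).
  assert (Hw0 : w <> 0) by (unfold w; lra).
  clearbody w.
  set (psi1 := fun u => exp (- (/ 2 * u)) * (f u * cos (w * u) - (Derive f u - f u / 2) / w * sin (w * u))).
  set (psi2 := fun u => exp (- (/ 2 * u)) * (f u * sin (w * u) + (Derive f u - f u / 2) / w * cos (w * u))).
  assert (D1 : forall u, in_oint a b u -> is_derive psi1 u 0).
  { intros u Hu. pose proof (Hs 1%nat u Hu). pose proof (Hs 2%nat u Hu).
    simpl in *. unfold psi1. dtac f lam (HO u Hu) u.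
    replace lam with (w * w + / 4) by lra. field. auto. }
  assert (D2 : forall u, in_oint a b u -> is_derive psi2 u 0).
  { intros u Hu. pose proof (Hs 1%nat u Hu). pose proof (Hs 2%nat u Hu).
    simpl in *. unfold psi2. dtac f lam (HO u Hu) u.
    replace lam with (w * w + / 4) by lra. field. auto. }
  exists (psi1 t0), (psi2 t0).
  intros t Ht.
  rewrite <- (const_on a b psi1 t t0), <- (const_on a b psi2 t t0); auto.
  unfold psi1, psi2. rewrite !exp_Ropp.
  assert (exp (/ 2 * t) > 0) by apply exp_pos.
  pose proof (sin2_cos2 (w * t)).
  unfold Rsqr in H0.
  transitivity (f t * (sin (w * t) * sin (w * t) + cos (w * t) * cos (w * t))); [rewrite H0; field|].
  field. split; [auto|lra].
Qed.

Lemma oint_ex c d : Rbar_lt c d -> exists s, in_oint c d s.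
Proof.
  unfold in_oint; destruct c as [x| |], d as [y| |]; simpl; intros H; try contradiction.
  - exists ((x+y)/2); lra.
  - exists (x+1); lra.
  - exists (y-1); lra.
  - exists 0; auto.
Qed.

Theorem theorem4p18 (a b c d : Rbar) (f h : R -> R) (lam : R) :
  Rbar_lt a b -> Rbar_lt c d ->
  smooth_on a b f -> (forall t, in_oint a b t -> 0 < f t) ->
  smooth_on c d h -> (forall s, in_oint c d s -> 0 < h s) ->
  (ssm_Einstein a b c d f h lam <->
    ((lam < / 4 -> exists c1 c2 : R, forall t, in_oint a b t ->
        f t = c1 * exp ((1 + sqrt (1 - 4 * lam)) / 2 * t)
            + c2 * exp ((1 - sqrt (1 - 4 * lam)) / 2 * t)) /\
     (lam = / 4 -> exists c1 c2 : R, forall t, in_oint a b t ->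
        f t = c1 * exp (/ 2 * t) + c2 * t * exp (/ 2 * t)) /\
     (/ 4 < lam -> exists c1 c2 : R, forall t, in_oint a b t ->
        f t = c1 * exp (/ 2 * t) * cos (sqrt (4 * lam - 1) / 2 * t)
            + c2 * exp (/ 2 * t) * sin (sqrt (4 * lam - 1) / 2 * t)))).
Proof.
  intros Hab Hcd Hf Hfp Hh Hhp.
  assert (Eq : ssm_Einstein a b c d f h lam <-> forall t, in_oint a b t -> ODE f lam t).
  { split.
    - intros HE t Ht. destruct (oint_ex c d Hcd) as [s Hs].
      specialize (HE t s Ht Hs 0%nat 0%nat ltac:(lia) ltac:(lia)).
      rewrite (ricci_eq a b c d f h Hf Hfp Hh Hhp) in HE by (auto; lia).
      unfold RicF in HE. cbn in HE. pose proof (Hfp t Ht).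
      unfold ODE.
      assert (E : Derive (Derive f) t - Derive f t
                  = (Derive (Derive f) t - Derive f t) / f t * f t) by (field; lra).
      rewrite HE in E. lra.
    - intros HO t s Ht Hs i l Hi Hl.
      rewrite (ricci_eq a b c d f h Hf Hfp Hh Hhp) by auto.
      pose proof (Hfp t Ht). pose proof (HO t Ht) as HOt. unfold ODE in HOt.
      destruct i as [|[|i]]; try lia; destruct l as [|[|l]]; try lia;
      unfold RicF; cbn;
      try replace (Derive (Derive f) t) with (Derive f t - lam * f t) by lra;
      first [ring | field; lra]. }
  rewrite Eq. split.
  - intros HO. split; [|split]; intros Hl.
    + apply (fwd1 a b f lam); auto.
    + apply (fwd2 a b f lam); auto.
    + apply (fwd3 a b f lam); auto.
  - intros [H1 [H2 H3]].
    destruct (total_order_T lam (/ 4)) as [[Hlt|Heq]|Hgt].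
    + destruct (H1 Hlt) as [c1 [c2 HF]]. eapply back1; eauto.
    + destruct (H2 Heq) as [c1 [c2 HF]]. eapply back2; eauto.
    + destruct (H3 Hgt) as [c1 [c2 HF]]. eapply back3; eauto.
Qed.
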